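(* For any $a,b,c,d\in\{0,1,2,3\}$, the set $\{\ket{\psi_{a0}},\ket{\psi_{b1}},\ket{\psi_{c2}},\ket{\psi_{d3}}\}$ of generalized Bell states in $\mathbb{C}^4\otimes\mathbb{C}^4$ can be perfectly discriminated by one-way LOCC using only projective measurements. Similarly, for any $a,b,c,d\in\{0,1,2,3\}$, the set $\{\ket{\psi_{0a}},\ket{\psi_{1b}},\ket{\psi_{2c}},\ket{\psi_{3d}}\}$ can be perfectly discriminated by one-way LOCC using only projective measurements.
   Context: Generalized Bell states in $\mathbb{C}^4\otimes\mathbb{C}^4$ (Alice holds the first factor, Bob the second): $\ket{\psi_{nm}}=\frac12\sum_{j=0}^{3}e^{2\pi i jn/4}\ket{j}_A\ket{j\oplus_4 m}_B$ for $n,m\in\{0,1,2,3\}$, where $j\oplus_4 m=(j+m)\bmod 4$ and $\{\ket{j}\}$ are standard bases. Perfect discrimination by one-way LOCC using only projective measurements means: one party performs a projective measurement on her subsystem, communicates the outcome classically, and the other party then performs a projective measurement (depending on that outcome) whose result identifies with certainty which state of the set was shared. *)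

(* Defs.v *)
From HB Require Import structures.
From mathcomp Require Import all_boot all_order all_algebra all_field.
Set Implicit Arguments. Unset Strict Implicit. Unset Printing Implicit Defensive.
Import Order.TTheory GRing.Theory Num.Theory.
Local Open Scope ring_scope.

(* A pure state of C^4 (x) C^4 is represented by its coefficient matrix:
   psi j k = amplitude of |j>_A |k>_B. *)
Definition bistate := 'M[algC]_4.

Definition adjmx (A : 'M[algC]_4) : 'M[algC]_4 := (map_mx Num.conj_op A)^T.

(* (A (x) B) |psi>, in the coefficient-matrix representation. *)
Definition apply_local (A B : 'M[algC]_4) (psi : bistate) : bistate :=
  A *m psi *m B^T.

(* Generalized Bell state psi_{nm} = 1/2 sum_j e^{2 pi i j n/4} |j>|j+m mod 4>,
   with e^{2 pi i jn/4} = 'i^(j n). *)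
Definition bell (n m : 'I_4) : bistate :=
  \matrix_(j < 4, k < 4)
    (if (k : nat) == ((j + m) %% 4)%N then 2^-1 * 'i ^+ (j * n) else 0).

Definition is_PVM (r : nat) (P : 'I_r -> 'M[algC]_4) : Prop :=
  (forall i, adjmx (P i) = P i /\ P i *m P i = P i) /\
  (forall i j, i != j -> P i *m P j = 0) /\
  \sum_(i < r) P i = 1%:M.

(* One-way LOCC perfect discrimination with projective measurements,
   Alice measures first: an outcome (i, j) occurs with nonzero probability on
   state S s iff (P_i (x) Q^i_j) S s <> 0; the guess g i j must then be s. *)
Definition owlocc_AtoB (k : nat) (S : 'I_k -> bistate) : Prop :=
  exists (r t : nat) (P : 'I_r -> 'M[algC]_4) (Q : 'I_r -> 'I_t -> 'M[algC]_4)
         (g : 'I_r -> 'I_t -> 'I_k),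
    is_PVM P /\ (forall i, is_PVM (Q i)) /\
    forall s i j, apply_local (P i) (Q i j) (S s) != 0 -> g i j = s.

Definition owlocc_BtoA (k : nat) (S : 'I_k -> bistate) : Prop :=
  exists (r t : nat) (Q : 'I_r -> 'M[algC]_4) (P : 'I_r -> 'I_t -> 'M[algC]_4)
         (g : 'I_r -> 'I_t -> 'I_k),
    is_PVM Q /\ (forall i, is_PVM (P i)) /\
    forall s i j, apply_local (P i j) (Q i) (S s) != 0 -> g i j = s.

Definition one_way_LOCC_proj (k : nat) (S : 'I_k -> bistate) : Prop :=
  owlocc_AtoB S \/ owlocc_BtoA S.

Definition pick4 (a b c d : 'I_4) (t : 'I_4) : 'I_4 := nth a [:: a; b; c; d] t.

(* Main.v *)
Require Import Defs.
From HB Require Import structures.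
From mathcomp Require Import all_boot all_order all_algebra all_field.
From mathcomp Require Import ring zify.
Set Implicit Arguments. Unset Strict Implicit. Unset Printing Implicit Defensive.
Import Order.TTheory GRing.Theory Num.Theory.
Local Open Scope ring_scope.

Lemma i4 : 'i ^+ 4 = 1 :> algC.
Proof. by rewrite (exprM _ 2 2) sqrCi -signr_odd. Qed.

Lemma expi_mod k : 'i ^+ k = 'i ^+ (k %% 4) :> algC.
Proof. by rewrite {1}(divn_eq k 4) exprD mulnC exprM i4 expr1n mul1r. Qed.

Lemma expi_eq a b : (a %% 4 = b %% 4)%N -> 'i ^+ a = 'i ^+ b :> algC.
Proof. by move=> h; rewrite expi_mod h -expi_mod. Qed.

Lemma conji k : ('i ^+ k)^* = 'i ^+ (3 * k) :> algC.
Proof.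
rewrite rmorphXn /= conjCi exprM; congr (_ ^+ _).
by rewrite !exprS expr0 mulr1 mulrA -expr2 sqrCi mulN1r.
Qed.

Lemma sumi e c : \sum_(j < 4) 'i ^+ (c + j * e) = 'i ^+ c * (if (e %% 4 == 0)%N then 4 else 0) :> algC.
Proof.
under eq_bigr => j _ do rewrite exprD mulnC exprM.
rewrite -mulr_sumr; congr (_ * _).
have i2 : 'i ^+ 2 = -1 :> algC by rewrite sqrCi.
have i3 : 'i ^+ 3 = - 'i :> algC by rewrite exprS i2 mulrN1.
have i6 : 'i ^+ 6 = -1 :> algC by rewrite (expi_mod 6).
have i9 : 'i ^+ 9 = 'i :> algC by rewrite (expi_mod 9) expr1.
rewrite !big_ord_recr big_ord0 /= add0r.
rewrite (expi_mod e).
have : (e %% 4 < 4)%N by rewrite ltn_pmod.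
case: (e %% 4)%N => [|[|[|[|//]]]] _ /=.
all: rewrite -!exprM ?mulnE /=.
all: rewrite ?i2 ?i3 ?i6 ?i9 ?expr0 ?expr1.
all: rewrite ?i4; ring.
Qed.

Lemma termE (A B : algC) a b c e z : ((a + b) %% 4 = (c + z * e) %% 4)%N ->
  A * 'i ^+ a * (B * 'i ^+ b) = (A * B) * 'i ^+ (c + z * e).
Proof. by move=> h; rewrite mulrACA -exprD (expi_eq h). Qed.

Definition F (u : 'I_4) : 'M[algC]_4 :=
  \matrix_(x < 4, y < 4) (4^-1 * 'i ^+ (x * u + 3 * (y * u))).

Lemma F_adj u : adjmx (F u) = F u.
Proof.
apply/matrixP => x y; rewrite !mxE /= rmorphM /= fmorphV rmorph_nat conji.
congr (_ * _); apply: expi_eq; lia.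
Qed.

Lemma F_idem u : F u *m F u = F u.
Proof.
apply/matrixP => x y; rewrite !mxE.
rewrite (eq_bigr (fun z : 'I_4 => (4^-1 * 4^-1) * 'i ^+ ((x * u + 3 * (y * u)) + z * (4 * u)))); last by move=> z _; rewrite !mxE; apply: termE; lia.
rewrite -mulr_sumr sumi.
have -> : ((4 * u) %% 4 == 0)%N by rewrite modnMr.
by field.
Qed.

Lemma F_orth u w : u != w -> F u *m F w = 0.
Proof.
move=> uw; apply/matrixP => x y; rewrite !mxE.
rewrite (eq_bigr (fun z : 'I_4 => (4^-1 * 4^-1) * 'i ^+ ((x * u + 3 * (y * w)) + z * (3 * u + w)))); last by move=> z _; rewrite !mxE; apply: termE; lia.
rewrite -mulr_sumr sumi.
have -> : ((3 * u + w) %% 4 == 0)%N = false.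
  apply/negP => /eqP h; move: uw => /eqP; apply; apply: val_inj => /=.
  move: (ltn_ord u) (ltn_ord w) h; lia.
by rewrite !mulr0.
Qed.

Lemma F_sum : \sum_(u < 4) F u = 1%:M.
Proof.
apply/matrixP => x y; rewrite summxE !mxE.
rewrite (eq_bigr (fun u : 'I_4 => 4^-1 * 'i ^+ (0 + u * (x + 3 * y)))); last by move=> u _; rewrite !mxE; congr (_ * _); apply: expi_eq; lia.
rewrite -mulr_sumr sumi expr0 mul1r.
case: (eqVneq x y) => [->|xy].
  have -> : ((y + 3 * y) %% 4 == 0)%N.
    by apply/eqP; lia.
  by rewrite mulVf // pnatr_eq0.
have -> : ((x + 3 * y) %% 4 == 0)%N = false.
  apply/negP => /eqP h; move: xy => /eqP; apply; apply: val_inj => /=.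
  move: (ltn_ord x) (ltn_ord y) h; lia.
by rewrite mulr0.
Qed.

Lemma F_PVM : is_PVM F.
Proof.
split; first by move=> i; split; [exact: F_adj | exact: F_idem].
split; [exact: F_orth | exact: F_sum].
Qed.

Lemma sum_if (f : 'I_4 -> algC) (c : algC) (e : nat) (he : (e < 4)%N) :
  \sum_(k < 4) (if (k : nat) == e then c else 0) * f k = c * f (Ordinal he).
Proof.
rewrite (bigD1 (Ordinal he)) //= eqxx big1 ?addr0 // => k hk.
case: eqP => [h|]; last by rewrite mul0r.
by rewrite -val_eqE /= h eqxx in hk.
Qed.

Lemma expi_modmul a b c : 'i ^+ (c * ((a %% 4) * b)) = 'i ^+ (c * (a * b)) :> algC.
Proof. by apply: expi_eq; rewrite -modnMmr modnMml modnMmr. Qed.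

Lemma modfix a b r : ((a + 3 * ((r %% 4) * b)) %% 4 = (a + 3 * (r * b)) %% 4)%N.
Proof.
apply/eqP; rewrite eqn_modDl; apply/eqP.
by rewrite -(modnMmr 3 (r %% 4 * b)) modnMml modnMmr.
Qed.

Lemma termE3 (A B D : algC) a b c C : ((a + b + c) %% 4 = C %% 4)%N ->
  A * 'i ^+ a * (B * 'i ^+ b * (D * 'i ^+ c)) = A * B * D * 'i ^+ C.
Proof. by move=> h; rewrite -(expi_eq h) !exprD; ring. Qed.

Lemma F_bell (u v n m : 'I_4) : ((3 * u + n + 3 * v) %% 4 != 0)%N ->
  apply_local (F u) (F v) (bell n m) = 0.
Proof.
move=> hne; rewrite /apply_local; apply/matrixP => x y; rewrite !mxE.
rewrite (eq_bigr (fun k => \sum_z F u x z * bell n m z k * F v y k)); last first.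
  by move=> k _; rewrite !mxE mulr_suml.
rewrite exchange_big /=.
rewrite (eq_bigr (fun z : 'I_4 => (2^-1 * 4^-1 * 4^-1) * 'i ^+ ((x * u + y * v + 3 * (m * v)) + z * (3 * u + n + 3 * v)))); last first.
  move=> z _.
  transitivity (\sum_(k < 4) (if (k : nat) == ((z + m) %% 4)%N then 2^-1 * 'i ^+ (z * n) else 0) * (F u x z * F v y k)).
    by apply: eq_bigr => k _; rewrite [bell _ _ _ _]mxE; case: ifP => _; ring.
  rewrite (sum_if _ _ (ltn_pmod (z + m) (isT : (0 < 4)%N))) !mxE /= (expi_eq (modfix _ _ _)).
  apply: termE3; lia.
rewrite -mulr_sumr sumi (negbTE hne).
by rewrite !mulr0.
Qed.


Definition E (j : 'I_4) : 'M[algC]_4 := delta_mx j j.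

Lemma E_PVM : is_PVM E.
Proof.
split.
  move=> i; split; last by rewrite /E mul_delta_mx.
  by apply/matrixP => x y; rewrite /adjmx /E !mxE /= rmorph_nat andbC.
split; first by move=> i j ij; rewrite /E mul_delta_mx_0.
apply/matrixP => x y; rewrite summxE !mxE.
rewrite (bigD1 x) //= big1 ?addr0; last first.
  by move=> j /negbTE jx; rewrite mxE eq_sym jx.
by rewrite mxE eqxx /= eq_sym.
Qed.

Lemma E_bell (i j : 'I_4) (M : bistate) : M i j = 0 -> apply_local (E i) (E j) M = 0.
Proof.
move=> h; rewrite /apply_local /E trmx_delta; apply/matrixP => x y; rewrite !mxE.
apply: big1 => k _; rewrite !mxE.
case: (eqVneq k j) => [->|kj] /=; last by rewrite mulr0.
rewrite big1 ?mul0r // => z _; rewrite !mxE.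
case: (eqVneq z i) => [->|zi] /=; first by rewrite h mulr0.
by rewrite andbF mul0r.
Qed.

Theorem theorem2 (a b c d : 'I_4) :
  one_way_LOCC_proj (fun t : 'I_4 => bell (pick4 a b c d t) t) /\
  one_way_LOCC_proj (fun t : 'I_4 => bell t (pick4 a b c d t)).
Proof.
split; left.
  exists 4%N, 4%N, E, (fun _ => E),
    (fun i j : 'I_4 => Ordinal (ltn_pmod (j + 4 - i) (isT : (0 < 4)%N))).
  split; first exact: E_PVM.
  split; first by move=> _; exact: E_PVM.
  move=> s i j hne; apply/val_inj => /=.
  apply/eqP; apply: contraNT hne => hg; apply/eqP; apply: E_bell.
  rewrite mxE; case: eqP => // hj; exfalso; move/negP: hg; apply; apply/eqP.
  move: (ltn_ord i) (ltn_ord j) (ltn_ord s) hj; lia.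
exists 4%N, 4%N, F, (fun _ => F),
  (fun u v : 'I_4 => Ordinal (ltn_pmod (u + v) (isT : (0 < 4)%N))).
split; first exact: F_PVM.
split; first by move=> _; exact: F_PVM.
move=> s u v hne; apply/val_inj => /=.
apply/eqP; apply: contraNT hne => hg; apply/eqP; apply: F_bell.
apply/negP => /eqP h; move/negP: hg; apply; apply/eqP.
move: (ltn_ord u) (ltn_ord v) (ltn_ord s) h; lia.
Qed.
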